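(* Let $\Omega$ be a non-degenerate quadratic form on $\mathbb{R}^3$ which is either positive definite (spherical/elliptic geometry on $P(\mathbb{R}^3)$) or of signature $(-,+,+)$ (hyperbolic geometry in the interior of the conic $\Omega=0$). Let $p_1,\dots,p_6$ be the vertices of a hexagon in this geometry, with sides $\ell_i=p_ip_{i+1}$ (indices mod $6$). For $i=1,2,3$ let $m_i$ be the common perpendicular of the opposite sides $\ell_i$ and $\ell_{i+3}$, i.e. the line through the absolute poles $\ell_i^\circ$ and $\ell_{i+3}^\circ$. Then the three lines $m_1,m_2,m_3$ pass through one point if and only if the six vertices $p_1,\dots,p_6$ lie on a conic.
   Context: The absolute polarity sends a point $[v]\in P(\mathbb{R}^3)$ to the line $\{[w]:\Omega(v,w)=0\}$ (its polar $v^\circ$) and a line to its pole (the point whose polar it is). In Cayley–Klein geometry with absolute $\Omega$, the common perpendicular of two lines is the line joining their poles. *)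

(* Defs.v *)
(* Real projective plane P(R^3), points = nonzero row vectors. *)
From HB Require Import structures.
From mathcomp Require Import all_boot all_order all_algebra.
From mathcomp Require Import reals.
Set Implicit Arguments. Unset Strict Implicit. Unset Printing Implicit Defensive.
Import Order.TTheory GRing.Theory Num.Theory.
Local Open Scope ring_scope.

Section Defs.
Variable R : realType.

Definition bform (A : 'M[R]_3) (u v : 'rV[R]_3) : R := (u *m A *m v^T) 0 0.

Definition pos_def (A : 'M[R]_3) : Prop :=
  forall v : 'rV[R]_3, v != 0 -> 0 < bform A v v.

Definition sig_mpp (A : 'M[R]_3) : Prop :=
  exists P : 'M[R]_3, P \in unitmx /\
    P^T *m A *m P = diag_mx (\row_(i < 3) (if i == 0 then -1 else 1)).

(* u and v represent distinct points of P(R^3) (linearly independent) *)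
Definition indep2 (u v : 'rV[R]_3) : Prop :=
  forall a b : R, a *: u + b *: v = 0 -> a = 0 /\ b = 0.

Definition on_line (u v x : 'rV[R]_3) : Prop :=
  exists a b : R, x = a *: u + b *: v.

Definition same_line (u v u' v' : 'rV[R]_3) : Prop :=
  on_line u v u' /\ on_line u v v'.

(* [q] is the pole of the line uv: its polar q° = {[w] : Omega(q,w)=0} is uv *)
Definition is_pole (A : 'M[R]_3) (u v q : 'rV[R]_3) : Prop :=
  q != 0 /\ forall w : 'rV[R]_3, bform A q w = 0 <-> on_line u v w.

Definition sh (k : nat) (i : 'I_6) : 'I_6 := inord ((i + k) %% 6).

Definition concurrent (u1 v1 u2 v2 u3 v3 : 'rV[R]_3) : Prop :=
  exists x : 'rV[R]_3, x != 0 /\ on_line u1 v1 x /\ on_line u2 v2 x /\ on_line u3 v3 x.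

Definition on_conic (p : 'I_6 -> 'rV[R]_3) : Prop :=
  exists C : 'M[R]_3, C^T = C /\ C != 0 /\ forall i, bform C (p i) (p i) = 0.

End Defs.

(* Main.v *)
Require Import Defs.
From HB Require Import structures.
From mathcomp Require Import all_boot all_order all_algebra.
From mathcomp Require Import reals.
From mathcomp Require Import ring lra.
Import Order.TTheory GRing.Theory Num.Theory.
Local Open Scope ring_scope.

Set Implicit Arguments. Unset Strict Implicit.
Section Aux.
Variable R : realType.
Implicit Types u v w x y z : 'rV[R]_3.

Definition cp (u : 'rV[R]_3) (k : nat) : R := u 0 (inord k).
Definition tr u : R*R*R := (cp u 0, cp u 1, cp u 2).
Definition of3 (t : R*R*R) : 'rV[R]_3 :=
  let '(a,b,c) := t in \row_(j<3) nth 0 [:: a; b; c] j.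
Definition cr (u v : R*R*R) : R*R*R :=
  let '(u0,u1,u2) := u in let '(v0,v1,v2) := v in
  (u1*v2-u2*v1, u2*v0-u0*v2, u0*v1-u1*v0).
Definition dt (u v : R*R*R) : R :=
  let '(u0,u1,u2) := u in let '(v0,v1,v2) := v in u0*v0+u1*v1+u2*v2.
Definition crossv u v := of3 (cr (tr u) (tr v)).
Definition dot u v := dt (tr u) (tr v).

Lemma ord3 (j : 'I_3) : j = inord 0 \/ j = inord 1 \/ j = inord 2.
Proof.
case: j => [[|[|[|//]]] Hj]; [left|right;left|right;right];
  by apply/val_inj; rewrite /= inordK.
Qed.

Lemma vec3_ext u v : cp u 0 = cp v 0 -> cp u 1 = cp v 1 -> cp u 2 = cp v 2 -> u = v.
Proof.
move=> h0 h1 h2; apply/rowP => j; case: (ord3 j) => [->|[->|->]]; by [].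
Qed.

Lemma tr_of3 t : tr (of3 t) = t.
Proof. by case: t => [[a b] c]; rewrite /tr /cp !mxE !inordK. Qed.

Lemma cpD a b u v k : cp (a *: u + b *: v) k = a * cp u k + b * cp v k.
Proof. by rewrite /cp !mxE. Qed.
Lemma cpZ a u k : cp (a *: u) k = a * cp u k.
Proof. by rewrite /cp !mxE. Qed.
Lemma cp0 k : cp 0 k = 0.
Proof. by rewrite /cp mxE. Qed.

Lemma dotE u v : dot u v = cp u 0 * cp v 0 + cp u 1 * cp v 1 + cp u 2 * cp v 2.
Proof. by []. Qed.

Lemma cpc0 u v : cp (crossv u v) 0 = cp u 1 * cp v 2 - cp u 2 * cp v 1.
Proof. by rewrite /crossv /tr /cr /of3 {1}/cp mxE inordK. Qed.
Lemma cpc1 u v : cp (crossv u v) 1 = cp u 2 * cp v 0 - cp u 0 * cp v 2.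
Proof. by rewrite /crossv /tr /cr /of3 {1}/cp mxE inordK. Qed.
Lemma cpc2 u v : cp (crossv u v) 2 = cp u 0 * cp v 1 - cp u 1 * cp v 0.
Proof. by rewrite /crossv /tr /cr /of3 {1}/cp mxE inordK. Qed.

Lemma tr_cross u v : tr (crossv u v) = cr (tr u) (tr v).
Proof. by rewrite /crossv tr_of3. Qed.

Lemma sum3 (F : 'I_3 -> R) : \sum_(j<3) F j = F (inord 0) + F (inord 1) + F (inord 2).
Proof.
rewrite !big_ord_recr big_ord0 /= add0r.
by congr (F _ + F _ + F _); apply/val_inj; rewrite /= inordK.
Qed.

Lemma bformE A u v : bform A u v = dot (u *m A) v.
Proof. by rewrite /bform mxE sum3 /dot /dt /tr /cp !mxE. Qed.

Lemma sq3_nz (a b c : R) : (a != 0) || (b != 0) || (c != 0) -> a*a + b*b + c*c != 0.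
Proof.
have ha := sqr_ge0 a; have hb := sqr_ge0 b; have hc := sqr_ge0 c.
rewrite -!expr2 => /orP[/orP[]|] h.
- have : 0 < a ^+ 2 by rewrite exprn_even_gt0 // h orbT.
  move=> ?; apply/eqP; lra.
- have : 0 < b ^+ 2 by rewrite exprn_even_gt0 // h orbT.
  move=> ?; apply/eqP; lra.
- have : 0 < c ^+ 2 by rewrite exprn_even_gt0 // h orbT.
  move=> ?; apply/eqP; lra.
Qed.

Lemma dot_self_nz w : w != 0 -> dot w w != 0.
Proof.
move=> nw; rewrite dotE; apply: sq3_nz.
apply: contraNT nw; rewrite !negb_or !negbK => /andP[/andP[/eqP h0 /eqP h1] /eqP h2].
by apply/eqP/vec3_ext; rewrite cp0.
Qed.


Lemma indep_nz u v : indep2 u v -> u != 0 /\ v != 0.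
Proof.
move=> h; split; apply/eqP => E.
- have H : 1 *: u + 0 *: v = 0 by rewrite E scaler0 scale0r addr0.
  have [] := h _ _ H; by move/eqP; rewrite oner_eq0.
- have H : 0 *: u + 1 *: v = 0 by rewrite E scaler0 scale0r addr0.
  have [_] := h _ _ H; by move/eqP; rewrite oner_eq0.
Qed.

Lemma dot_lin a b u v z : dot (a *: u + b *: v) z = a * dot u z + b * dot v z.
Proof. rewrite !dotE !cpD; ring. Qed.

Lemma cross_nz u v : indep2 u v -> crossv u v != 0.
Proof.
move=> h; have [nu _] := indep_nz h.
apply/eqP => E.
have H : dot u v *: u + (- dot u u) *: v = 0.
  apply/vec3_ext; rewrite !cpD cp0.
  - transitivity (cp u 1 * cp (crossv u v) 2 - cp u 2 * cp (crossv u v) 1).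
      rewrite !dotE cpc1 cpc2. ring.
    by rewrite E !cp0; ring.
  - transitivity (cp u 2 * cp (crossv u v) 0 - cp u 0 * cp (crossv u v) 2).
      rewrite !dotE cpc0 cpc2; ring.
    by rewrite E !cp0; ring.
  - transitivity (cp u 0 * cp (crossv u v) 1 - cp u 1 * cp (crossv u v) 0).
      rewrite !dotE cpc0 cpc1; ring.
    by rewrite E !cp0; ring.
have [_] := h _ _ H.
move/eqP; rewrite oppr_eq0; apply/negP; exact: dot_self_nz.
Qed.

Lemma dot_on_line u v z : on_line u v z -> dot z (crossv u v) = 0.
Proof. move=> [a [b ->]]; rewrite !dotE !cpD cpc0 cpc1 cpc2; ring. Qed.

Lemma on_line_of u v z : indep2 u v -> dot z (crossv u v) = 0 -> on_line u v z.
Proof.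
move=> h hz; have nw := dot_self_nz (cross_nz h).
set w := crossv u v in nw hz.
exists (dot z (crossv v w) / dot w w), (dot z (crossv w u) / dot w w).
move: nw hz; rewrite /w !dotE !(cpc0, cpc1, cpc2) => nw hz.
apply/vec3_ext; rewrite cpD.
- apply/eqP; rewrite -subr_eq0; apply/eqP.
  transitivity ((cp z 0 * (cp u 1 * cp v 2 - cp u 2 * cp v 1) +
      cp z 1 * (cp u 2 * cp v 0 - cp u 0 * cp v 2) +
      cp z 2 * (cp u 0 * cp v 1 - cp u 1 * cp v 0)) * (cp u 1 * cp v 2 - cp u 2 * cp v 1)
      / ((cp u 1 * cp v 2 - cp u 2 * cp v 1) * (cp u 1 * cp v 2 - cp u 2 * cp v 1) +
      (cp u 2 * cp v 0 - cp u 0 * cp v 2) * (cp u 2 * cp v 0 - cp u 0 * cp v 2) +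
      (cp u 0 * cp v 1 - cp u 1 * cp v 0) * (cp u 0 * cp v 1 - cp u 1 * cp v 0))).
    by field.
  by rewrite hz !mul0r.
- apply/eqP; rewrite -subr_eq0; apply/eqP.
  transitivity ((cp z 0 * (cp u 1 * cp v 2 - cp u 2 * cp v 1) +
      cp z 1 * (cp u 2 * cp v 0 - cp u 0 * cp v 2) +
      cp z 2 * (cp u 0 * cp v 1 - cp u 1 * cp v 0)) * (cp u 2 * cp v 0 - cp u 0 * cp v 2)
      / ((cp u 1 * cp v 2 - cp u 2 * cp v 1) * (cp u 1 * cp v 2 - cp u 2 * cp v 1) +
      (cp u 2 * cp v 0 - cp u 0 * cp v 2) * (cp u 2 * cp v 0 - cp u 0 * cp v 2) +
      (cp u 0 * cp v 1 - cp u 1 * cp v 0) * (cp u 0 * cp v 1 - cp u 1 * cp v 0))).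
    by field.
  by rewrite hz !mul0r.
- apply/eqP; rewrite -subr_eq0; apply/eqP.
  transitivity ((cp z 0 * (cp u 1 * cp v 2 - cp u 2 * cp v 1) +
      cp z 1 * (cp u 2 * cp v 0 - cp u 0 * cp v 2) +
      cp z 2 * (cp u 0 * cp v 1 - cp u 1 * cp v 0)) * (cp u 0 * cp v 1 - cp u 1 * cp v 0)
      / ((cp u 1 * cp v 2 - cp u 2 * cp v 1) * (cp u 1 * cp v 2 - cp u 2 * cp v 1) +
      (cp u 2 * cp v 0 - cp u 0 * cp v 2) * (cp u 2 * cp v 0 - cp u 0 * cp v 2) +
      (cp u 0 * cp v 1 - cp u 1 * cp v 0) * (cp u 0 * cp v 1 - cp u 1 * cp v 0))).
    by field.
  by rewrite hz !mul0r.
Qed.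


Lemma pole_lambda (A : 'M[R]_3) u v q : A \in unitmx -> indep2 u v -> is_pole A u v q ->
  exists2 l, l != 0 & q *m A = l *: crossv u v.
Proof.
move=> uA h [nq hp].
set r := q *m A.
have nr : r != 0.
  apply: contra nq => /eqP r0.
  by rewrite -[q](mulmxK uA) -/r r0 mul0mx.
have S : dot r v = 0.
  by rewrite -bformE; apply/hp; exists 0, 1; rewrite scale0r add0r scale1r.
have T : dot r u = 0.
  by rewrite -bformE; apply/hp; exists 1, 0; rewrite scale0r addr0 scale1r.
have nw := dot_self_nz (cross_nz h).
set w := crossv u v in nw *.
have rE : r = (dot r w / dot w w) *: w.
  apply/vec3_ext; rewrite cpZ.
  - apply/eqP; rewrite -subr_eq0; apply/eqP.
    transitivity ((dot r v * (cp w 1 * cp u 2 - cp w 2 * cp u 1) -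
                   dot r u * (cp w 1 * cp v 2 - cp w 2 * cp v 1)) / dot w w).
      move: nw; rewrite /w /r !dotE !(cpc0, cpc1, cpc2) => nw'; field; exact: nw'.
    by rewrite S T; ring.
  - apply/eqP; rewrite -subr_eq0; apply/eqP.
    transitivity ((dot r v * (cp w 2 * cp u 0 - cp w 0 * cp u 2) -
                   dot r u * (cp w 2 * cp v 0 - cp w 0 * cp v 2)) / dot w w).
      move: nw; rewrite /w /r !dotE !(cpc0, cpc1, cpc2) => nw'; field; exact: nw'.
    by rewrite S T; ring.
  - apply/eqP; rewrite -subr_eq0; apply/eqP.
    transitivity ((dot r v * (cp w 0 * cp u 1 - cp w 1 * cp u 0) -
                   dot r u * (cp w 0 * cp v 1 - cp w 1 * cp v 0)) / dot w w).
      move: nw; rewrite /w /r !dotE !(cpc0, cpc1, cpc2) => nw'; field; exact: nw'.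
    by rewrite S T; ring.
exists (dot r w / dot w w) => //.
apply: contra nr => /eqP l0; by rewrite rE l0 scale0r.
Qed.


Lemma dot_cross_self u v : dot u (crossv u v) = 0.
Proof. by apply: dot_on_line; exists 1, 0; rewrite scale1r scale0r addr0. Qed.
Lemma dot_cross_self2 u v : dot v (crossv u v) = 0.
Proof. by apply: dot_on_line; exists 0, 1; rewrite scale1r scale0r add0r. Qed.

Lemma dot_lin2 a b u v z : dot z (a *: u + b *: v) = a * dot z u + b * dot z v.
Proof. rewrite !dotE !cpD; ring. Qed.

Lemma dot0r z : dot z 0 = 0.
Proof. rewrite dotE !cp0; ring. Qed.

Lemma indep_cross u1 u2 u3 u4 : indep2 u1 u2 -> indep2 u3 u4 ->
  ~ same_line u1 u2 u3 u4 -> indep2 (crossv u1 u2) (crossv u3 u4).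
Proof.
move=> h12 h34 hs a b E.
case: (eqVneq a 0) => [a0|an0].
  split => //; move: E; rewrite a0 scale0r add0r => /eqP.
  by rewrite scaler_eq0 (negPf (cross_nz h34)) orbF => /eqP.
exfalso; apply: hs; split; apply: on_line_of => //.
- have : a * dot u3 (crossv u1 u2) = 0.
    transitivity (dot u3 (a *: crossv u1 u2 + b *: crossv u3 u4) - b * dot u3 (crossv u3 u4)).
      rewrite dot_lin2; ring.
    by rewrite E dot0r dot_cross_self; ring.
  by move/eqP; rewrite mulf_eq0 (negPf an0) => /eqP.
- have : a * dot u4 (crossv u1 u2) = 0.
    transitivity (dot u4 (a *: crossv u1 u2 + b *: crossv u3 u4) - b * dot u4 (crossv u3 u4)).
      rewrite dot_lin2; ring.
    by rewrite E dot0r dot_cross_self2; ring.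
  by move/eqP; rewrite mulf_eq0 (negPf an0) => /eqP.
Qed.

Lemma pair (A : 'M[R]_3) u1 u2 u3 u4 q1 q2 : A \in unitmx ->
  indep2 u1 u2 -> indep2 u3 u4 -> ~ same_line u1 u2 u3 u4 ->
  is_pole A u1 u2 q1 -> is_pole A u3 u4 q2 ->
  forall x, on_line q1 q2 x <->
    dot (x *m A) (crossv (crossv u1 u2) (crossv u3 u4)) = 0.
Proof.
move=> uA h12 h34 hs p1 p2 x.
have [l1 l1n E1] := pole_lambda uA h12 p1.
have [l2 l2n E2] := pole_lambda uA h34 p2.
split.
  move=> [a [b ->]]; apply: dot_on_line.
  exists (a * l1), (b * l2).
  by rewrite mulmxDl -!scalemxAl E1 E2 !scalerA.
move=> hx; have [a [b Ex]] := on_line_of (indep_cross h12 h34 hs) hx.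
have F1 : crossv u1 u2 *m invmx A = l1^-1 *: q1.
  have -> : crossv u1 u2 = l1^-1 *: (q1 *m A) by rewrite E1 scalerA mulVf // scale1r.
  by rewrite -scalemxAl mulmxK.
have F2 : crossv u3 u4 *m invmx A = l2^-1 *: q2.
  have -> : crossv u3 u4 = l2^-1 *: (q2 *m A) by rewrite E2 scalerA mulVf // scale1r.
  by rewrite -scalemxAl mulmxK.
exists (a * l1^-1), (b * l2^-1).
by rewrite -[x](mulmxK uA) Ex mulmxDl -!scalemxAl F1 F2 !scalerA.
Qed.


Definition sgn (b : bool) (x : R) := if b then - x else x.
Fixpoint detf (n : nat) (f : nat -> nat -> R) : R :=
  match n with
  | 0 => 1
  | n'.+1 => foldr (fun k acc => sgn (odd k) (f 0%N k * detf n' (fun i j => f i.+1 (bump k j))) + acc) 0 (iota 0 n)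
  end.

Lemma foldr_sum (F : nat -> R) s : foldr (fun k acc => F k + acc) 0 s = \sum_(k <- s) F k.
Proof. by elim: s => [|a s IH]; rewrite ?big_nil ?big_cons //= IH. Qed.

Lemma detfS n f : detf n.+1 f = foldr (fun k acc => sgn (odd k) (f 0%N k * detf n (fun i j => f i.+1 (bump k j))) + acc) 0 (iota 0 n.+1).
Proof. by []. Qed.

Lemma detfE n (f : nat -> nat -> R) : \det (\matrix_(i<n,j<n) f i j) = detf n f.
Proof.
elim: n f => [|n IH] f; first by rewrite det_mx00.
rewrite (expand_det_row _ ord0) detfS foldr_sum.
rewrite -[iota 0 n.+1]/(index_iota 0 n.+1) big_mkord.
apply: eq_bigr => k _.
rewrite /cofactor mxE.
have -> : row' ord0 (col' k (\matrix_(i < n.+1, j < n.+1) f i j)) =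
          \matrix_(i<n,j<n) f i.+1 (bump k j).
  by apply/matrixP => i j; rewrite !mxE.
rewrite (IH (fun i j => f i.+1 (bump k j))) add0n -signr_odd /sgn.
case: (odd k); rewrite ?expr1 ?expr0; ring.
Qed.

Definition vern (u : R*R*R) (j : nat) : R :=
  let '(x,y,z) := u in nth 0 [:: x*x; y*y; z*z; x*y; x*z; y*z] j.

Lemma key (P0 P1 P2 P3 P4 P5 : R*R*R) :
  \det (\matrix_(j<6,i<6) vern (nth P0 [:: P0; P1; P2; P3; P4; P5] i) j) =
  dt (cr (cr P0 P1) (cr P3 P4))
     (cr (cr (cr P1 P2) (cr P4 P5)) (cr (cr P2 P3) (cr P5 P0))).
Proof.
rewrite (detfE 6 (fun j i => vern (nth P0 [:: P0; P1; P2; P3; P4; P5] i) j)).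
case: P0 => [[x0 y0] z0]; case: P1 => [[x1 y1] z1]; case: P2 => [[x2 y2] z2].
case: P3 => [[x3 y3] z3]; case: P4 => [[x4 y4] z4]; case: P5 => [[x5 y5] z5].
rewrite /= /sgn /=.
ring.
Qed.

Lemma detX a0 a1 a2 :
  \det (\matrix_(j<3,i<3) cp (nth a0 [:: a0; a1; a2] i) j) = dot a0 (crossv a1 a2).
Proof.
rewrite (detfE 3 (fun j i => cp (nth a0 [:: a0; a1; a2] i) j)) /= /sgn /=.
rewrite dotE cpc0 cpc1 cpc2; ring.
Qed.

Lemma zeroX y a0 a1 a2 :
  (y *m \matrix_(j<3,i<3) cp (nth a0 [:: a0; a1; a2] i) j = 0) <->
  [/\ dot y a0 = 0, dot y a1 = 0 & dot y a2 = 0].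
Proof.
have E : forall i : 'I_3, (y *m \matrix_(j<3,i<3) cp (nth a0 [:: a0; a1; a2] i) j) 0 i
          = dot y (nth a0 [:: a0; a1; a2] i).
  by move=> i; rewrite mxE sum3 !mxE !inordK.
split.
  move=> H; have e (k : nat) : (k < 3)%N -> dot y (nth a0 [:: a0; a1; a2] k) = 0.
    by move=> hk; have := E (inord k); rewrite H mxE inordK // => <-.
  by split; [exact: (e 0%N) | exact: (e 1%N) | exact: (e 2%N)].
move=> [h0 h1 h2]; apply/rowP => i; rewrite E mxE.
by case: (ord3 i) => [->|[->|->]]; rewrite inordK.
Qed.


Lemma ord6 (j : 'I_6) : j = inord 0 \/ j = inord 1 \/ j = inord 2 \/ j = inord 3
   \/ j = inord 4 \/ j = inord 5.
Proof.
case: j => [[|[|[|[|[|[|//]]]]]] Hj];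
  [left|right;left|do 2 right;left|do 3 right;left|do 4 right;left|do 5 right];
  by apply/val_inj; rewrite /= inordK.
Qed.

Lemma sum6 (F : 'I_6 -> R) : \sum_(j<6) F j =
  F (inord 0) + F (inord 1) + F (inord 2) + F (inord 3) + F (inord 4) + F (inord 5).
Proof.
rewrite !big_ord_recr big_ord0 /= add0r.
by congr (F _ + F _ + F _ + F _ + F _ + F _); apply/val_inj; rewrite /= inordK.
Qed.

Lemma cpM x (C : 'M[R]_3) k : cp (x *m C) k =
  cp x 0 * C (inord 0) (inord k) + cp x 1 * C (inord 1) (inord k) + cp x 2 * C (inord 2) (inord k).
Proof. by rewrite /cp mxE sum3. Qed.

Definition Mp (p : 'I_6 -> 'rV[R]_3) := \matrix_(j<6,i<6) vern (tr (p i)) j.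

Lemma detMp p : \det (Mp p) =
  dt (cr (cr (tr (p (inord 0))) (tr (p (inord 1)))) (cr (tr (p (inord 3))) (tr (p (inord 4)))))
     (cr (cr (cr (tr (p (inord 1))) (tr (p (inord 2)))) (cr (tr (p (inord 4))) (tr (p (inord 5)))))
         (cr (cr (tr (p (inord 2))) (tr (p (inord 3)))) (cr (tr (p (inord 5))) (tr (p (inord 0)))))).
Proof.
rewrite -key; congr (\det _); apply/matrixP => j i; rewrite !mxE.
by case: (ord6 i) => [->|[->|[->|[->|[->|->]]]]]; rewrite inordK.
Qed.

Lemma conicA p : on_conic p <-> \det (Mp p) = 0.
Proof.
split.
  move=> [C [CT [Cn hC]]].
  have sy a b : C (inord a) (inord b) = C (inord b) (inord a).
    by have := congr1 (fun M : 'M[R]_3 => M (inord b) (inord a)) CT; rewrite mxE.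
  apply/eqP/det0P.
  exists (\row_(j<6) nth 0 [:: C (inord 0) (inord 0); C (inord 1) (inord 1); C (inord 2) (inord 2);
       2 * C (inord 0) (inord 1); 2 * C (inord 0) (inord 2); 2 * C (inord 1) (inord 2)] j).
    apply: contra Cn => /eqP v0.
    have ev (k : nat) : (k < 6)%N -> (\row_(j<6) nth 0 [:: C (inord 0) (inord 0); C (inord 1) (inord 1); C (inord 2) (inord 2);
       2 * C (inord 0) (inord 1); 2 * C (inord 0) (inord 2); 2 * C (inord 1) (inord 2)] j) 0 (inord k) = 0.
      by move=> hk; rewrite v0 mxE.
    have e0 := ev 0%N isT; have e1 := ev 1%N isT; have e2 := ev 2%N isT.
    have e3 := ev 3%N isT; have e4 := ev 4%N isT; have e5 := ev 5%N isT.
    rewrite !mxE !inordK //= in e0 e1 e2 e3 e4 e5.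
    apply/eqP/matrixP => a b; rewrite mxE.
    case: (ord3 a) => [->|[->|->]]; case: (ord3 b) => [->|[->|->]];
      rewrite ?e0 ?e1 ?e2 // ?(sy 1%N 0%N) ?(sy 2%N 0%N) ?(sy 2%N 1%N); lra.
  apply/rowP => i; rewrite !mxE sum6 !mxE !inordK //=.
  rewrite -(hC i) bformE dotE !cpM.
  by rewrite (sy 1%N 0%N) (sy 2%N 0%N) (sy 2%N 1%N); ring.
move/eqP/det0P => [v nv vM].
pose w (k : nat) := v 0 (inord k).
pose C := \matrix_(a<3,b<3) nth 0 (nth [::] [:: [:: w 0%N; w 3%N / 2; w 4%N / 2];
   [:: w 3%N / 2; w 1%N; w 5%N / 2]; [:: w 4%N / 2; w 5%N / 2; w 2%N]] a) b.
exists C; split.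
  apply/matrixP => a b; rewrite !mxE.
  by case: (ord3 a) => [->|[->|->]]; case: (ord3 b) => [->|[->|->]]; rewrite !inordK.
split.
  apply: contra nv => /eqP C0.
  have eC (a b : nat) : (a < 3)%N -> (b < 3)%N -> C (inord a) (inord b) = 0.
    by move=> ha hb; rewrite C0 mxE.
  have e00 := eC 0%N 0%N isT isT; have e11 := eC 1%N 1%N isT isT.
  have e22 := eC 2%N 2%N isT isT; have e01 := eC 0%N 1%N isT isT.
  have e02 := eC 0%N 2%N isT isT; have e12 := eC 1%N 2%N isT isT.
  rewrite !mxE !inordK //= in e00 e11 e22 e01 e02 e12.
  apply/eqP/rowP => j; rewrite mxE.
  case: (ord6 j) => [->|[->|[->|[->|[->|->]]]]]; rewrite -/(w _); lra.
move=> i.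
have := congr1 (fun M : 'rV[R]_6 => M 0 i) vM; rewrite !mxE sum6 !mxE !inordK //= => e.
rewrite bformE dotE !cpM /C !mxE !inordK //= -/(w _) -e.
rewrite -/(w 0%N) -/(w 1%N) -/(w 2%N) -/(w 3%N) -/(w 4%N) -/(w 5%N).
field. all: try (by []). 
Qed.

End Aux.

Unset Implicit Arguments.
Lemma shI (k m r : nat) : (m < 6)%N -> ((m + k) %% 6)%N = r -> sh k (inord m : 'I_6) = inord r.
Proof. move=> hm hr; rewrite /sh (@inordK 5 m hm) hr. by []. Qed.

Lemma z6 : (0 : 'I_6) = inord 0.
Proof. apply: val_inj => /=. by rewrite inordK. Qed.


Theorem mainTheorem2 (R : realType) (A : 'M[R]_3)
  (p q : 'I_6 -> 'rV[R]_3) :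
  A^T = A -> \det A != 0 ->
  (pos_def A \/ (sig_mpp A /\ forall i, bform A (p i) (p i) < 0)) ->
  (forall i, p i != 0) ->
  (forall i, indep2 (p i) (p (sh 1 i))) ->
  (forall i, ~ same_line (p i) (p (sh 1 i)) (p (sh 3 i)) (p (sh 4 i))) ->
  (forall i, is_pole A (p i) (p (sh 1 i)) (q i)) ->
  (concurrent (q 0) (q (sh 3 0)) (q (sh 1 0)) (q (sh 4 0))
              (q (sh 2 0)) (q (sh 5 0))
   <-> on_conic p).
Proof.
move=> _ dA _ _ Hind Hnsl Hpole.
have uA : A \in unitmx by rewrite unitmxE unitfE.
rewrite z6 (shI 3 0 3) // (shI 1 0 1) // (shI 4 0 4) // (shI 2 0 2) // (shI 5 0 5) //.
have h0 := Hind (inord 0); have h1 := Hind (inord 1); have h2 := Hind (inord 2).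
have h3 := Hind (inord 3); have h4 := Hind (inord 4); have h5 := Hind (inord 5).
have s0 := Hnsl (inord 0); have s1 := Hnsl (inord 1); have s2 := Hnsl (inord 2).
have o0 := Hpole (inord 0); have o1 := Hpole (inord 1); have o2 := Hpole (inord 2).
have o3 := Hpole (inord 3); have o4 := Hpole (inord 4); have o5 := Hpole (inord 5).
rewrite (shI 1 0 1) // in h0 o0; rewrite (shI 1 1 2) // in h1 o1.
rewrite (shI 1 2 3) // in h2 o2; rewrite (shI 1 3 4) // in h3 o3.
rewrite (shI 1 4 5) // in h4 o4; rewrite (shI 1 5 0) // in h5 o5.
rewrite (shI 1 0 1) // (shI 3 0 3) // (shI 4 0 4) // in s0.
rewrite (shI 1 1 2) // (shI 3 1 4) // (shI 4 1 5) // in s1.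
rewrite (shI 1 2 3) // (shI 3 2 5) // (shI 4 2 0) // in s2.
have P0 := pair uA h0 h3 s0 o0 o3.
have P1 := pair uA h1 h4 s1 o1 o4.
have P2 := pair uA h2 h5 s2 o2 o5.
set X0 := crossv _ _ in P0; set X1 := crossv _ _ in P1; set X2 := crossv _ _ in P2.
have E : \det (Mp p) = \det (\matrix_(j<3,i<3) cp (nth X0 [:: X0; X1; X2] i) j).
  by rewrite detX detMp /dot /X0 /X1 /X2 !tr_cross.
rewrite conicA E; split.
  move=> [x [nx [l0 [l1 l2]]]].
  apply/eqP/det0P; exists (x *m A).
    apply: contra nx => /eqP xA0; by rewrite -[x](mulmxK uA) xA0 mul0mx.
  by apply/zeroX; split; [apply/P0 | apply/P1 | apply/P2].
move/eqP/det0P => [y ny /zeroX [y0 y1 y2]].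
exists (y *m invmx A); split.
  apply: contra ny => /eqP yA0.
  by rewrite -[y](mulmxKV uA) yA0 mul0mx.
rewrite -[y](mulmxKV uA) in y0 y1 y2.
by split; [|split]; [apply/P0 | apply/P1 | apply/P2].
Qed.
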